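(* For every $p\in\mathbb{N}$ and $A,B\in\mathbb{R}^{n\times n}$: (i) $\|AB\|_{b,p}\le\|A\|_{S_\infty}\|B\|_{b,p}$; (ii) $\|A\|_{S_\infty}\le\|A\|_{b,p}$, and $\|A\|_{b,\infty}=\|A\|_{S_\infty}$; (iii) $\|A\|_{b,p}\le m^{1/p}\|A\|_{S_\infty}$; (iv) if $C\in\mathbb{R}^{n\times n}$ is block upper triangular with $C(0{:}j,j)=B_jA(0{:}j,j)$ for some $B_j\in\mathbb{R}^{n_{j+1}\times n_{j+1}}$, $j=0,\dots,m-1$, then $\|C\|_{b,2}\le\big(\max_{j=0,\dots,m-1}\|B_j\|_{S_\infty}\big)\|A\|_{b,2}$.
   Context: Fix a block structure $0=n_0<n_1<\dots<n_m=n$. Block $(i,j)$, $0\le i,j\le m-1$, of a matrix in $\mathbb{R}^{n\times n}$ consists of rows $n_i+1..n_{i+1}$ and columns $n_j+1..n_{j+1}$; $A(0{:}j,j)$ denotes the block column $j$ restricted to block rows $0..j$ (an $n_{j+1}\times(n_{j+1}-n_j)$ matrix). $\mathcal{D}_b\subset\mathbb{R}^{n\times m}$ is the set of $X$ with $X_{ij}=0$ whenever $i\notin[n_{j-1}+1,n_j]$. For $p\in\mathbb{N}\cup\{\infty\}$, $\|A\|_{b,p}:=\sup\{\|AX\|_{S_p}:X\in\mathcal{D}_b,\ \|X\|_{S_\infty}\le1\}$, where $\|\cdot\|_{S_p}$ is the Schatten $p$-norm (sum of $p$-th powers of singular values to the power $1/p$; $S_\infty$ is the spectral norm). *)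

(* Defs.v *)
From HB Require Import structures.
From mathcomp Require Import all_boot all_order all_algebra.
From mathcomp Require Import all_classical all_reals all_analysis.
Set Implicit Arguments. Unset Strict Implicit. Unset Printing Implicit Defensive.
Import Order.TTheory GRing.Theory Num.Theory.
Local Open Scope classical_set_scope.
Local Open Scope ring_scope.

Inductive sidx := SFin of nat | SInf.

Section Defs.
Variable R : realType.

(* s is the list of singular values of A : 'M_(r,c) (padded with zeros to
   length c): the nonnegative square roots of the eigenvalues of A^T A,
   counted with algebraic multiplicity. *)
Definition is_svals r c (A : 'M[R]_(r, c)) (s : seq R) : Prop :=
  [/\ size s = c, all (fun x => 0 <= x) s &
      char_poly (A^T *m A) = \prod_(x <- s) ('X - (x ^+ 2)%:P)].

Definition svals r c (A : 'M[R]_(r, c)) : seq R := xget [::] (is_svals A).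

Definition schatten (p : sidx) r c (A : 'M[R]_(r, c)) : R :=
  match p with
  | SFin k => powR (\sum_(x <- svals A) x ^+ k) (k%:R)^-1
  | SInf => \big[Num.max/0]_(x <- svals A) x
  end.

Definition block_struct (n m : nat) (nb : nat -> nat) : Prop :=
  [/\ nb 0%N = 0%N, nb m = n & forall i, (i < m)%N -> (nb i < nb i.+1)%N].

(* D_b : X_{ij} = 0 unless row i lies in block j (0-based indices) *)
Definition in_Db n m (nb : nat -> nat) (X : 'M[R]_(n, m)) : Prop :=
  forall (i : 'I_n) (j : 'I_m), ~~ ((nb j <= i)%N && (i < nb j.+1)%N) -> X i j = 0.

Definition bnorm (p : sidx) n m (nb : nat -> nat) (A : 'M[R]_n) : R :=
  sup [set schatten p (A *m X) | X in [set X : 'M[R]_(n, m) | in_Db nb X /\ schatten SInf X <= 1]].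

(* nat-indexed matrix entry (0 outside the range) *)
Definition mxe r c (M : 'M[R]_(r, c)) (i j : nat) : R :=
  oapp (fun i' : 'I_r => oapp (fun j' : 'I_c => M i' j') 0 (insub j)) 0 (insub i).

End Defs.

(* Main.v *)
Require Import Defs.
From HB Require Import structures.
From mathcomp Require Import all_boot all_order all_algebra.
From mathcomp Require Import all_classical all_reals all_analysis.
From mathcomp Require Import complex spectral zify.
Import Order.TTheory GRing.Theory Num.Theory.
Set Implicit Arguments. Unset Strict Implicit. Unset Printing Implicit Defensive.
Local Open Scope ring_scope.


Section Cx.
Variable R : realType.
Local Notation C := (R[i]).
Local Notation toC := (real_complex R).
Local Notation ReC := (@complex.Re R).
Local Notation ImC := (@complex.Im R).
Local Open Scope sesquilinear_scope.

Definition sq (z : C) : R := ReC z ^+ 2 + ImC z ^+ 2.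

Lemma sq_ge0 z : 0 <= sq z.
Proof. by rewrite addr_ge0 // sqr_ge0. Qed.

Lemma mulJ (z : C) : z * Num.conj z = toC (sq z).
Proof. by rewrite /sq add_Re2_Im2 sqr_normc. Qed.

Lemma sq_eq0 z : (sq z == 0) = (z == 0).
Proof.
apply/idP/idP => [|/eqP->]; last by rewrite /sq expr0n /= addr0.
rewrite /sq paddr_eq0 ?sqr_ge0 // !sqrf_eq0 => /andP[/eqP h1 /eqP h2].
by case: z h1 h2 => a b /= -> ->.
Qed.

Definition nq k (w : 'rV[C]_k) : R := \sum_i sq (w 0 i).

Lemma nqE k (w : 'rV[C]_k) : (w *m w ^t*) 0 0 = toC (nq w).
Proof.
rewrite !mxE rmorph_sum; apply: eq_bigr => i _; by rewrite !mxE mulJ.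
Qed.

Lemma nq_ge0 k (w : 'rV[C]_k) : 0 <= nq w.
Proof. by rewrite sumr_ge0 // => i _; exact: sq_ge0. Qed.

Lemma nq_eq0 k (w : 'rV[C]_k) : (nq w == 0) = (w == 0).
Proof.
apply/idP/idP => [|/eqP->]; last first.
  by rewrite /nq big1 // => i _; rewrite mxE; apply/eqP; rewrite sq_eq0.
rewrite psumr_eq0; last by move=> i _; exact: sq_ge0.
move=> /allP h; apply/eqP/rowP => i; rewrite mxE; apply/eqP.
by rewrite -sq_eq0; apply: h; rewrite mem_index_enum.
Qed.

Lemma nq_unitary k (w : 'rV[C]_k) (U : 'M[C]_k) : U \is unitarymx ->
  nq (w *m U) = nq w.
Proof.
move=> Uu; apply: complexI; rewrite -!nqE.
by rewrite trmx_mul map_mxM mulmxA -(mulmxA w) (unitarymxP Uu) mulmx1.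
Qed.

Definition nR k (v : 'rV[R]_k) : R := \sum_i v 0 i ^+ 2.

Lemma nR_ge0 k (v : 'rV[R]_k) : 0 <= nR v.
Proof. by rewrite sumr_ge0 // => i _; rewrite sqr_ge0. Qed.

Definition mC r c (M : 'M[R]_(r, c)) : 'M[C]_(r, c) := map_mx toC M.
Definition reM r c (M : 'M[C]_(r, c)) : 'M[R]_(r, c) := map_mx ReC M.
Definition imM r c (M : 'M[C]_(r, c)) : 'M[R]_(r, c) := map_mx ImC M.

Lemma ReCM (u : C) k : ReC (u * toC k) = ReC u * k.
Proof. case: u => a b. simpc. by rewrite /=. Qed.
Lemma ImCM (u : C) k : ImC (u * toC k) = ImC u * k.
Proof. case: u => a b. by simpc. Qed.

Lemma nq_split k l (u : 'rV[C]_k) (K : 'M[R]_(k, l)) :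
  nq (u *m mC K) = nR (reM u *m K) + nR (imM u *m K).
Proof.
rewrite /nq /nR -big_split; apply: eq_bigr => j _; rewrite /sq !mxE.
rewrite raddf_sum [ImC _]raddf_sum /=.
congr (_ ^+ 2 + _ ^+ 2); apply: eq_bigr => i _; rewrite !mxE.
  exact: ReCM.
exact: ImCM.
Qed.

Lemma nq_mC k (v : 'rV[R]_k) : nq (mC v) = nR v.
Proof.
rewrite /nq /nR; apply: eq_bigr => i _; rewrite /sq !mxE /=.
by rewrite expr0n /= addr0.
Qed.

Lemma mC_mul r c d (M : 'M[R]_(r, c)) (N : 'M[R]_(c, d)) : mC (M *m N) = mC M *m mC N.
Proof. exact: map_mxM. Qed.

Lemma mC_tr r c (M : 'M[R]_(r, c)) : mC M^T = (mC M)^T.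
Proof. by rewrite /mC map_trmx. Qed.

Lemma mC_conj r c (M : 'M[R]_(r, c)) : (mC M) ^ Num.conj = mC M.
Proof. by apply/matrixP => i j; rewrite !mxE; exact: conjc_real. Qed.

Lemma nq_split1 k (u : 'rV[C]_k) : nq u = nR (reM u) + nR (imM u).
Proof.
have := nq_split u 1%:M.
have -> : mC (1%:M : 'M[R]_k) = 1%:M by rewrite /mC map_mx1.
by rewrite !mulmx1.
Qed.

Definition gram r c (M : 'M[R]_(r, c)) : 'M[C]_c := (mC M)^T *m mC M.
Definition sU r c (M : 'M[R]_(r, c)) := spectralmx (gram M).
Definition sd r c (M : 'M[R]_(r, c)) := spectral_diag (gram M).

Lemma gram_herm r c (M : 'M[R]_(r, c)) : (gram M) ^t* = gram M.
Proof.
by rewrite /gram trmx_mul trmxK map_mxM -map_trmx mC_conj.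
Qed.

Lemma gram_normal r c (M : 'M[R]_(r, c)) : gram M \is normalmx.
Proof. by apply/normalmxP; rewrite gram_herm. Qed.

Lemma sU_unitary r c (M : 'M[R]_(r, c)) : sU M \is unitarymx.
Proof. exact: spectral_unitarymx. Qed.

Lemma gram_spec r c (M : 'M[R]_(r, c)) :
  gram M = (sU M) ^t* *m diag_mx (sd M) *m sU M.
Proof.
have h := orthomx_spectralP (gram_normal M).
by rewrite {1}h invmx_unitary // sU_unitary.
Qed.

Lemma gram_diag r c (M : 'M[R]_(r, c)) :
  sU M *m gram M *m (sU M) ^t* = diag_mx (sd M).
Proof.
have Uu := sU_unitary M.
rewrite gram_spec !mulmxA (unitarymxP Uu) mul1mx -mulmxA (unitarymxP Uu).
by rewrite mulmx1.
Qed.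

Lemma gram_quad r c (M : 'M[R]_(r, c)) (u : 'rV[C]_c) :
  (u *m gram M *m u ^t*) 0 0 = toC (nq (u *m (mC M)^T)).
Proof.
by rewrite -nqE /gram trmx_mul map_mxM trmxK mC_conj !mulmxA.
Qed.

Definition lamf r c (M : 'M[R]_(r, c)) (i : 'I_c) : R := ReC (sd M 0 i).

Lemma sd_real r c (M : 'M[R]_(r, c)) i :
  sd M 0 i = toC (nq (row i (sU M) *m (mC M)^T)).
Proof.
have h := congr1 (fun A : 'M[C]_c => A i i) (gram_diag M).
rewrite /= [in RHS]mxE eqxx mulr1n in h; rewrite -h.
rewrite -gram_quad; rewrite !mxE; apply: eq_bigr => j _; rewrite !mxE.
congr (_ * _); apply: eq_bigr => l _; by rewrite !mxE.
Qed.

Lemma sdE r c (M : 'M[R]_(r, c)) i : sd M 0 i = toC (lamf M i).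
Proof. by rewrite /lamf sd_real. Qed.

Lemma lamf_ge0 r c (M : 'M[R]_(r, c)) i : 0 <= lamf M i.
Proof. by rewrite /lamf sd_real /=; exact: nq_ge0. Qed.

Lemma quad_diag k (a : 'rV[C]_k) (d : 'rV[C]_k) :
  (a *m diag_mx d *m a ^t*) 0 0 = \sum_i d 0 i * (a 0 i * Num.conj (a 0 i)).
Proof.
rewrite !mxE; apply: eq_bigr => i _; rewrite !mxE.
rewrite (bigD1 i) //= big1 ?addr0; last first.
  by move=> j /negbTE nji; rewrite !mxE nji mulr0n mulr0.
by rewrite !mxE eqxx mulr1n mulrAC mulrC.
Qed.

Lemma nq_gram r c (M : 'M[R]_(r, c)) (a : 'rV[C]_c) :
  nq (a *m sU M *m (mC M)^T) = \sum_i lamf M i * sq (a 0 i).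
Proof.
apply: complexI.
rewrite -gram_quad trmx_mul map_mxM !mulmxA -(mulmxA a) -(mulmxA a).
rewrite -(mulmxA (sU M)) -/(gram M) -(mulmxA a) gram_diag quad_diag rmorph_sum; apply: eq_bigr => i _.
by rewrite sdE mulJ rmorphM.
Qed.

End Cx.


Section BigMax.
Variable R : realType.
Variables (I : eqType) (s : seq I) (F : I -> R).
Local Notation bm := (\big[Num.max/0]_(j <- s) F j).
Lemma bm_ge0 : 0 <= bm.
Proof. by elim: s => [|x s' IH]; rewrite ?big_nil ?big_cons ?le_max ?IH ?orbT. Qed.
Lemma bm_ge i : i \in s -> F i <= bm.
Proof.
elim: s => [|x s' IH] //=; rewrite in_cons big_cons le_max.
by move=> /orP[/eqP->|/IH->]; rewrite ?lexx ?orbT.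
Qed.
Lemma bm_le b : 0 <= b -> (forall i, i \in s -> F i <= b) -> bm <= b.
Proof.
move=> b0; elim: s => [|x s' IH] h; rewrite ?big_nil ?big_cons ?ge_max //.
rewrite h ?mem_head // IH // => i hi; apply: h; by rewrite in_cons hi orbT.
Qed.
Lemma bm_ex : bm = 0 \/ exists2 i, i \in s & bm = F i.
Proof.
elim: s => [|x s' IH]; first by left; rewrite big_nil.
rewrite big_cons; set b := \big[Num.max/0]_(j <- s') F j.
case: (leP (F x) b) => h.
  case: IH => [h0|[i hi hi']]; [by left|right].
  by exists i => //; rewrite in_cons hi orbT.
by right; exists x => //; rewrite mem_head.
Qed.
End BigMax.

Section Sp.
Variable R : realType.
Local Notation C := (R[i]).
Local Notation toC := (real_complex R).
Local Notation ReC := (@complex.Re R).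
Local Notation ImC := (@complex.Im R).
Local Open Scope sesquilinear_scope.

Definition Lmax r c (M : 'M[R]_(r, c)) : R := \big[Num.max/0]_(i < c) lamf M i.

Lemma Lmax_ge0 r c (M : 'M[R]_(r, c)) : 0 <= Lmax M.
Proof. exact: bm_ge0. Qed.

Lemma lamf_le r c (M : 'M[R]_(r, c)) i : lamf M i <= Lmax M.
Proof. by apply: bm_ge; rewrite mem_index_enum. Qed.

Lemma nR_mC k l (v : 'rV[R]_k) (K : 'M[R]_(k, l)) :
  nR (v *m K) = nq (mC v *m mC K).
Proof. by rewrite -mC_mul nq_mC. Qed.

Lemma S1 r c (M : 'M[R]_(r, c)) (v : 'rV[R]_c) :
  nR (v *m M^T) <= Lmax M * nR v.
Proof.
have Uu := sU_unitary M.
set a := mC v *m (sU M)^t*.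
have ha : mC v = a *m sU M by rewrite /a mulmxKtV.
rewrite nR_mC mC_tr ha nq_gram -(nq_mC v) ha nq_unitary // /nq mulr_sumr.
apply: ler_sum => i _; apply: ler_wpM2r; [exact: sq_ge0 | exact: lamf_le].
Qed.

Lemma nR_scale k (a : R) (v : 'rV[R]_k) : nR (a *: v) = a ^+ 2 * nR v.
Proof. rewrite /nR mulr_sumr; apply: eq_bigr => i _; by rewrite mxE exprMn. Qed.

Lemma normalize k (v : 'rV[R]_k) : 0 < nR v ->
  exists w : 'rV[R]_k, nR w = 1 /\
    forall l (K : 'M[R]_(k, l)), nR (w *m K) = nR (v *m K) / nR v.
Proof.
move=> hv; exists ((Num.sqrt (nR v))^-1 *: v); split.
  by rewrite nR_scale exprVn sqr_sqrtr ?ltW // mulVf // gt_eqF.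
move=> l K; rewrite -scalemxAl nR_scale exprVn sqr_sqrtr ?ltW //.
by rewrite mulrC.
Qed.

Lemma S3 r c (M : 'M[R]_(r, c)) : (0 < c)%N ->
  exists w : 'rV[R]_c, nR w = 1 /\ nR (w *m M^T) = Lmax M.
Proof.
move=> c0.
have [i0 hi0] : exists i0, Lmax M = lamf M i0.
  case: (bm_ex (index_enum 'I_c) (lamf M)) => [h0|[i _ hi]]; last by exists i.
  exists (Ordinal c0); apply/eqP; rewrite eq_le lamf_le /Lmax h0 lamf_ge0.
  by [].
have Uu := sU_unitary M.
set a : 'rV[C]_c := delta_mx 0 i0.
set u := a *m sU M.
have hsq : forall j, sq (a 0 j) = (j == i0)%:R.
  move=> j; rewrite /a mxE eqxx /=; case: (j == i0) => /=; rewrite /sq /=.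
    by rewrite expr1n expr0n /= addr0.
  by rewrite expr0n /= addr0.
have nu : nq u = 1.
  rewrite /u nq_unitary // /nq (bigD1 i0) //= hsq eqxx big1 ?addr0 // => j hj.
  by rewrite hsq (negbTE hj).
have nuM : nq (u *m (mC M)^T) = Lmax M.
  rewrite /u nq_gram (bigD1 i0) //= hsq eqxx mulr1 big1 ?addr0 // => j hj.
  by rewrite hsq (negbTE hj) mulr0.
rewrite -mC_tr nq_split in nuM; rewrite nq_split1 in nu.
have h1 := S1 M (reM u); have h2 := S1 M (imM u).
have e1 : nR (reM u *m M^T) = Lmax M * nR (reM u).
  apply/eqP; rewrite eq_le h1 /=.
  have : Lmax M * nR (reM u) + Lmax M * nR (imM u) <=
         nR (reM u *m M^T) + nR (imM u *m M^T).
    by rewrite -mulrDr nu mulr1 nuM.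
  move=> h; rewrite -(lerD2r (Lmax M * nR (imM u))).
  by apply: (le_trans h); rewrite lerD2l.
have e2 : nR (imM u *m M^T) = Lmax M * nR (imM u).
  by apply: (addrI (nR (reM u *m M^T))); rewrite nuM e1 -mulrDr nu mulr1.
case: (ltrP 0 (nR (reM u))) => hre.
  have [w [w1 wK]] := normalize hre; exists w; split => //.
  by rewrite wK e1 mulfK // gt_eqF.
have hre0 : nR (reM u) = 0 by apply/eqP; rewrite eq_le hre nR_ge0.
exists (imM u); split; first by rewrite -nu hre0 add0r.
by rewrite e2 -[nR (imM u)]add0r -hre0 nu mulr1.
Qed.

Lemma S2 r c (M : 'M[R]_(r, c)) b : 0 <= b ->
  (forall v : 'rV[R]_c, nR (v *m M^T) <= b * nR v) -> Lmax M <= b.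
Proof.
move=> b0 h; case: (posnP c) => [c0|cpos].
  by rewrite /Lmax; move: (lamf M); rewrite c0 => F; rewrite big_ord0.
have [w [w1 wM]] := S3 M cpos.
by rewrite -wM -[b]mulr1 -w1 h.
Qed.

End Sp.


Section Sp3.
Variable R : realType.
Local Notation C := (R[i]).
Local Notation toC := (real_complex R).
Local Notation ReC := (@complex.Re R).
Local Notation ImC := (@complex.Im R).
Local Open Scope sesquilinear_scope.

Lemma nq_unitaryR k l (w : 'rV[C]_k) (U : 'M[C]_(k, l)) : U *m U ^t* = 1%:M ->
  nq (w *m U) = nq w.
Proof.
move=> Uu; apply: complexI; rewrite -!nqE.
by rewrite trmx_mul map_mxM mulmxA -(mulmxA w) Uu mulmx1.
Qed.

Lemma W_sand k l c (f : 'I_k -> 'I_l) (U : 'M[C]_(l, c)) (G : 'M[C]_c) :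
  rowsub f U *m G *m (rowsub f U) ^t* = mxsub f f (U *m G *m U ^t*).
Proof.
apply/matrixP => i j; rewrite !mxE; apply: eq_bigr => x _; rewrite !mxE.
by congr (_ * _); apply: eq_bigr => y _; rewrite !mxE.
Qed.

Lemma W_unitary k c (f : 'I_k -> 'I_c) (U : 'M[C]_c) : injective f ->
  U \is unitarymx -> rowsub f U *m (rowsub f U) ^t* = 1%:M.
Proof.
move=> finj Uu; have := W_sand f U 1%:M; rewrite !mulmx1 => ->.
rewrite (unitarymxP Uu); apply/matrixP => i j; rewrite !mxE.
by rewrite (inj_eq finj).
Qed.

Lemma quad_sub r c k (M : 'M[R]_(r, c)) (f : 'I_k -> 'I_c) (a : 'rV[C]_k) :
  injective f ->
  nq (a *m rowsub f (sU M) *m (mC M)^T) = \sum_i lamf M (f i) * sq (a 0 i).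
Proof.
move=> finj; apply: complexI.
rewrite -gram_quad trmx_mul map_mxM (mulmxA (a *m _ *m gram M)).
rewrite -(mulmxA a) -(mulmxA a) W_sand gram_diag.
have -> : mxsub f f (diag_mx (sd M)) = diag_mx (\row_i sd M 0 (f i)).
  by apply/matrixP => i j; rewrite !mxE (inj_eq finj).
rewrite quad_diag rmorph_sum; apply: eq_bigr => i _.
by rewrite mxE sdE mulJ rmorphM.
Qed.

Lemma nq_splitM r c (M : 'M[R]_(r, c)) (x : 'rV[C]_c) :
  nq (x *m (mC M)^T) = nR (reM x *m M^T) + nR (imM x *m M^T).
Proof. by rewrite -mC_tr nq_split. Qed.

Lemma S4 r c r' (M : 'M[R]_(r, c)) (N : 'M[R]_(r', c)) (al t : R) : 0 <= al ->
  (forall v : 'rV[R]_c, nR (v *m M^T) <= al * nR (v *m N^T)) ->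
  (#|[pred i | (t < lamf M i)%R]| <= #|[pred i | (t < al * lamf N i)%R]|)%N.
Proof.
move=> al0 hyp.
set S := [pred i | (t < lamf M i)%R]; set T := [pred i | (t < al * lamf N i)%R].
rewrite leqNgt; apply/negP => hST.
pose f : 'I_#|S| -> 'I_c := enum_val.
pose g : 'I_#|[predC T]| -> 'I_c := enum_val.
have finj : injective f := @enum_val_inj _ _.
have ginj : injective g := @enum_val_inj _ _.
pose W := rowsub f (sU M); pose W' := rowsub g (sU N).
have Wu : W *m W ^t* = 1%:M by apply: W_unitary => //; exact: sU_unitary.
have W'u : W' *m W' ^t* = 1%:M by apply: W_unitary => //; exact: sU_unitary.
have rW : \rank W = #|S| by apply: mxrank_unitary; apply/unitarymxP.
have rW' : \rank W' = #|[predC T]| by apply: mxrank_unitary; apply/unitarymxP.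
have cT := cardC T; rewrite card_ord in cT.
have hsc := mxrank_sum_cap W W'.
have hle := rank_leq_col (W + W')%MS.
have : (W :&: W')%MS != 0.
  rewrite -mxrank_eq0 -lt0n; move: hsc hle hST cT; rewrite rW rW'.
  have key : forall u v x y z c : nat,
    (v + u = x + z -> v <= c -> y < x -> y + z = c -> 0 < u)%N.
    by move=> u v x y z c'; lia.
  exact: key.
move=> Kn0.
have [i0 hi0] : exists i0, row i0 (W :&: W')%MS != 0.
  apply/existsP; apply: contraR Kn0; rewrite negb_exists => /forallP h.
  apply/eqP/row_matrixP => i; rewrite row0; exact/eqP/negPn/h.
set x := row i0 (W :&: W')%MS in hi0.
have xW : (x <= W)%MS by apply: submx_trans (row_sub _ _) (capmxSl _ _).
have xW' : (x <= W')%MS by apply: submx_trans (row_sub _ _) (capmxSr _ _).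
have [a ha] := submxP xW; have [b hb] := submxP xW'.
have nxa : nq x = nq a by rewrite ha nq_unitaryR.
have nxb : nq x = nq b by rewrite hb nq_unitaryR.
have qM : nq (x *m (mC M)^T) = \sum_i lamf M (f i) * sq (a 0 i).
  by rewrite ha quad_sub.
have qN : nq (x *m (mC N)^T) = \sum_i lamf N (g i) * sq (b 0 i).
  by rewrite hb quad_sub.
have hC : nq (x *m (mC M)^T) <= al * nq (x *m (mC N)^T).
  rewrite !nq_splitM mulrDr; apply: lerD; exact: hyp.
have an0 : a != 0 by apply: contraNneq hi0 => a0; rewrite ha a0 mul0mx.
have [k0 hk0] : exists k0, a 0 k0 != 0.
  apply/existsP; apply: contraR an0; rewrite negb_exists => /forallP h.
  apply/eqP/rowP => k; rewrite mxE; exact/eqP/negPn/h.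
have lt1 : t * nq x < nq (x *m (mC M)^T).
  rewrite qM nxa /nq mulr_sumr (bigD1 k0) //= [X in _ < X](bigD1 k0) //=.
  apply: ltr_leD.
    rewrite ltr_pM2r; first by have := enum_valP k0.
    by rewrite lt_def sq_eq0 hk0 sq_ge0.
  apply: ler_sum => k _; apply: ler_wpM2r; first exact: sq_ge0.
  by apply: ltW; have := enum_valP k.
have le2 : al * nq (x *m (mC N)^T) <= t * nq x.
  rewrite qN nxb /nq !mulr_sumr; apply: ler_sum => k _.
  rewrite mulrA; apply: ler_wpM2r; first exact: sq_ge0.
  by have := enum_valP k; rewrite inE /= -leNgt.
by have := lt_le_trans lt1 (le_trans hC le2); rewrite ltxx.
Qed.

End Sp3.


Section Sp4.
Variable R : realType.
Local Notation C := (R[i]).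
Local Notation toC := (real_complex R).
Local Open Scope sesquilinear_scope.

Lemma sU_left r c (M : 'M[R]_(r, c)) : (sU M) ^t* *m sU M = 1%:M.
Proof. by apply: mulmx1C; apply/unitarymxP; exact: sU_unitary. Qed.

Lemma S5 r c (M : 'M[R]_(r, c)) :
  \sum_(i < c) lamf M i = \sum_(j < r) \sum_(i < c) M j i ^+ 2.
Proof.
apply: complexI; rewrite !rmorph_sum.
transitivity (\sum_i sd M 0 i).
  by apply: eq_bigr => i _; exact: (esym (sdE M i)).
rewrite -mxtrace_diag -gram_diag mxtrace_mulC mulmxA sU_left mul1mx.
under [RHS]eq_bigr do rewrite rmorph_sum.
rewrite exchange_big /mxtrace; apply: eq_bigr => i _; rewrite mxE.
by apply: eq_bigr => j _; rewrite !mxE rmorphXn expr2.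
Qed.


Lemma char_poly_sim (F : comNzRingType) n (P Q D : 'M[F]_n) :
  Q *m P = 1%:M -> char_poly (Q *m D *m P) = char_poly D.
Proof.
move=> QP; rewrite /char_poly /char_poly_mx.
have -> : 'X%:M - map_mx polyC (Q *m D *m P) =
    map_mx polyC Q *m ('X%:M - map_mx polyC D) *m map_mx polyC P.
  rewrite mulmxBr mulmxBl !map_mxM; congr (_ - _).
  by rewrite scalar_mxC -mulmxA -map_mxM QP map_mx1 mulmx1.
by rewrite !det_mulmx mulrAC -det_mulmx -map_mxM QP map_mx1 det1 mul1r.
Qed.

Lemma char_gram r c (M : 'M[R]_(r, c)) :
  char_poly (M^T *m M) = \prod_(i < c) ('X - (lamf M i)%:P).
Proof.
apply: (@map_poly_inj _ _ (real_complex R)).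
rewrite map_char_poly map_mxM -map_trmx -/(mC M) -/(gram M).
rewrite gram_spec char_poly_sim ?sU_left //.
rewrite char_poly_trig ?diag_mx_is_trig // rmorph_prod; apply: eq_bigr => i _.
rewrite mxE eqxx mulr1n sdE; exact: (esym (map_polyXsubC _ _)).
Qed.

Definition lamL r c (M : 'M[R]_(r, c)) : seq R := [seq lamf M i | i <- index_enum 'I_c].

Lemma size_lamL r c (M : 'M[R]_(r, c)) : size (lamL M) = c.
Proof. by rewrite size_map -[in RHS](card_ord c) cardT enumT. Qed.

Lemma svals_ok r c (M : 'M[R]_(r, c)) : is_svals M (svals M).
Proof.
apply: xgetPex; exists [seq Num.sqrt x | x <- lamL M]; split.
- by rewrite size_map size_lamL.
- by apply/allP => x /mapP [y _ ->]; rewrite sqrtr_ge0.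
rewrite char_gram big_map big_map; apply: eq_bigr => i _.
by rewrite sqr_sqrtr // lamf_ge0.
Qed.

Lemma svals_perm r c (M : 'M[R]_(r, c)) :
  perm_eq [seq x ^+ 2 | x <- svals M] (lamL M).
Proof.
have [_ _ h] := svals_ok M.
apply: prod_XsubC_eq; rewrite !big_map -h char_gram //.
Qed.

Lemma svals_ge0 r c (M : 'M[R]_(r, c)) x : x \in svals M -> 0 <= x.
Proof. by have [_ /allP h _] := svals_ok M; exact: h. Qed.

Lemma svals_sum r c (M : 'M[R]_(r, c)) (F : R -> R) :
  \sum_(x <- svals M) F x = \sum_(i < c) F (Num.sqrt (lamf M i)).
Proof.
transitivity (\sum_(x <- svals M) F (Num.sqrt (x ^+ 2))).
  apply: eq_big_seq => x hx; rewrite sqrtr_sqr ger0_norm //; exact: svals_ge0 hx.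
rewrite -(big_map (fun x => x ^+ 2) xpredT (fun y => F (Num.sqrt y))).
by rewrite (perm_big _ (svals_perm M)) big_map.
Qed.

Lemma schatten_fin r c (M : 'M[R]_(r, c)) k :
  schatten (SFin k) M = powR (\sum_(i < c) Num.sqrt (lamf M i) ^+ k) (k%:R)^-1.
Proof. by rewrite /= svals_sum. Qed.

Lemma schatten_inf r c (M : 'M[R]_(r, c)) :
  schatten SInf M = Num.sqrt (Lmax M).
Proof.
rewrite /=; apply/eqP; rewrite eq_le; apply/andP; split.
  apply: bm_le; first exact: sqrtr_ge0.
  move=> x hx; rewrite -[x]ger0_norm ?(svals_ge0 hx) // -sqrtr_sqr.
  rewrite ler_wsqrtr //.
  have : x ^+ 2 \in lamL M.
    by rewrite -(perm_mem (svals_perm M)); apply: (map_f (fun x => x ^+ 2)).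
  by move=> /mapP [i _ ->]; exact: lamf_le.
case: (bm_ex (index_enum 'I_c) (lamf M)) => [h0|[i _ hi]].
  by rewrite /Lmax h0 sqrtr0 bm_ge0.
have : lamf M i \in [seq x ^+ 2 | x <- svals M].
  by rewrite (perm_mem (svals_perm M)) /lamL; apply: map_f; exact: mem_index_enum.
move=> /mapP [x hx hxi]; rewrite /Lmax hi hxi sqrtr_sqr ger0_norm.
  exact: (bm_ge (fun x => x) hx).
exact: svals_ge0 hx.
Qed.

End Sp4.


Section Sp5.
Variable R : realType.

Lemma seq_max (s : seq R) : s != [::] ->
  exists2 x, x \in s & forall z, z \in s -> z <= x.
Proof.
elim: s => [//|a s IH] _; case: s IH => [|b s] IH.
  by exists a; rewrite ?mem_head // => z; rewrite inE => /eqP->.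
have [x hx hmax] := IH isT; case: (leP a x) => h.
  exists x; first by rewrite in_cons hx orbT.
  by move=> z; rewrite in_cons => /orP[/eqP->|/hmax].
exists a; first exact: mem_head.
move=> z; rewrite in_cons => /orP[/eqP->//|/hmax hz]; exact: le_trans hz (ltW h).
Qed.

Lemma count_sum (f : R -> R) : {homo f : x y / x <= y} ->
  forall n (s u : seq R), size s = n -> size u = n ->
  (forall t, (count (fun x => (t < x)%R) s <= count (fun x => (t < x)%R) u)%N) ->
  \sum_(x <- s) f x <= \sum_(x <- u) f x.
Proof.
move=> fmono; elim=> [|n IH] s u hs hu hc.
  by clear hc; move: hs hu => /size0nil -> /size0nil ->; rewrite !big_nil.
have sn : s != [::] by move: hs; case: (s).
have un : u != [::] by move: hu; case: (u).
have [x hxs xmax] := seq_max sn; have [y hyu ymax] := seq_max un.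
have xy : x <= y.
  rewrite leNgt; apply/negP => yx; have := hc y.
  have -> : count (fun z => y < z) u = 0%N.
    apply/eqP; rewrite -leqn0 leqNgt -has_count; apply/hasPn => z hz.
    by rewrite -leNgt ymax.
  move=> h0; have : (0 < count (fun z => (y < z)%R) s)%N.
    by rewrite -has_count; apply/hasP; exists x.
  by rewrite leqNgt in h0; rewrite (negbTE h0).
have ps := perm_to_rem hxs; have pu := perm_to_rem hyu.
rewrite (perm_big _ ps) (perm_big _ pu) !big_cons; apply: lerD; first exact: fmono.
apply: IH; first by rewrite size_rem // hs.
  by rewrite size_rem // hu.
move=> t; have := hc t; rewrite (permP ps) (permP pu) /=.
case: (ltP t x) => htx.
  by rewrite (lt_le_trans htx xy) /= !add1n ltnS.
move=> _; suff -> : count (fun z => t < z) (rem x s) = 0%N by [].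
apply/eqP; rewrite -leqn0 leqNgt -has_count; apply/hasPn => z hz.
by rewrite -leNgt (le_trans _ htx) // xmax // (mem_rem hz).
Qed.

Lemma count_card c (P : pred R) (F : 'I_c -> R) :
  count P [seq F i | i <- index_enum 'I_c] = #|[pred i | P (F i)]|.
Proof. by rewrite count_map cardE -deprecated_filter_index_enum size_filter. Qed.

Local Notation opn M := (schatten SInf M).

Lemma opn_ge0 r c (M : 'M[R]_(r, c)) : 0 <= opn M.
Proof. by rewrite schatten_inf sqrtr_ge0. Qed.

Lemma D1 r c (M : 'M[R]_(r, c)) (v : 'rV[R]_c) :
  nR (v *m M^T) <= opn M ^+ 2 * nR v.
Proof. by rewrite schatten_inf sqr_sqrtr ?Lmax_ge0 //; exact: S1. Qed.

Lemma D1' r c (M : 'M[R]_(r, c)) b : 0 <= b ->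
  (forall v : 'rV[R]_c, nR (v *m M^T) <= b ^+ 2 * nR v) -> opn M <= b.
Proof.
move=> b0 h; rewrite schatten_inf -(ger0_norm b0) -sqrtr_sqr ler_wsqrtr //.
apply: S2 => //; exact: sqr_ge0.
Qed.

Lemma opn_mul r c d (A : 'M[R]_(r, c)) (B : 'M[R]_(c, d)) :
  opn (A *m B) <= opn A * opn B.
Proof.
apply: D1'; first by rewrite mulr_ge0 ?opn_ge0.
move=> v; rewrite trmx_mul mulmxA exprMn -mulrA.
apply: le_trans (D1 _ _) _; apply: ler_wpM2l; first exact: sqr_ge0.
exact: D1.
Qed.

Lemma root_pow (x : R) k : 0 <= x -> (0 < k)%N -> (x ^+ k) `^ (k%:R)^-1 = x.
Proof.
move=> x0 k0; rewrite -powR_mulrn // -powRrM mulfV ?powRr1 //.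
by rewrite pnatr_eq0 -lt0n.
Qed.

Lemma P1 r c (M : 'M[R]_(r, c)) k : (0 < k)%N -> opn M <= schatten (SFin k) M.
Proof.
move=> k0; rewrite schatten_inf schatten_fin.
case: (bm_ex (index_enum 'I_c) (lamf M)) => [h0|[i _ hi]].
  by rewrite /Lmax h0 sqrtr0 powR_ge0.
rewrite /Lmax hi -[X in X <= _](root_pow (sqrtr_ge0 _) k0).
apply: ge0_ler_powR; rewrite ?invr_ge0 ?ler0n // ?nnegrE ?exprn_ge0 ?sqrtr_ge0 //.
  by rewrite sumr_ge0 // => j _; rewrite exprn_ge0 ?sqrtr_ge0.
rewrite (bigD1 i) //= lerDl sumr_ge0 // => j _; by rewrite exprn_ge0 ?sqrtr_ge0.
Qed.

Lemma P2 r c (M : 'M[R]_(r, c)) k : (0 < k)%N ->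
  schatten (SFin k) M <= powR (c%:R) (k%:R)^-1 * opn M.
Proof.
move=> k0; rewrite schatten_fin.
have hS : \sum_(i < c) Num.sqrt (lamf M i) ^+ k <= c%:R * opn M ^+ k.
  apply: (@le_trans _ _ (\sum_(i < c) opn M ^+ k)); last first.
    by rewrite sumr_const card_ord mulr_natl.
  apply: ler_sum => i _.
  rewrite schatten_inf; apply: lerXn2r; rewrite ?nnegrE ?sqrtr_ge0 //.
  by rewrite ler_wsqrtr // lamf_le.
apply: le_trans (ge0_ler_powR _ _ _ hS) _; rewrite ?invr_ge0 ?ler0n ?nnegrE //.
- by rewrite sumr_ge0 // => j _; rewrite exprn_ge0 ?sqrtr_ge0.
- by rewrite mulr_ge0 ?ler0n // exprn_ge0 ?opn_ge0.
by rewrite powRM ?ler0n ?exprn_ge0 ?opn_ge0 // root_pow ?opn_ge0.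
Qed.

Lemma P3 r c d (A : 'M[R]_(r, c)) (Y : 'M[R]_(c, d)) k : (0 < k)%N ->
  schatten (SFin k) (A *m Y) <= opn A * schatten (SFin k) Y.
Proof.
move=> k0; rewrite !schatten_fin; set a := opn A.
have a0 : 0 <= a := opn_ge0 A.
have key : \sum_(i < d) Num.sqrt (lamf (A *m Y) i) ^+ k <=
           \sum_(i < d) Num.sqrt (a ^+ 2 * lamf Y i) ^+ k.
  have := @count_sum (fun y => Num.sqrt y ^+ k) _ d (lamL (A *m Y))
     [seq a ^+ 2 * y | y <- lamL Y].
  rewrite /lamL !big_map; apply.
  - move=> x y hxy /=; apply: lerXn2r; rewrite ?nnegrE ?sqrtr_ge0 //.
    exact: ler_wsqrtr.
  - exact: size_lamL.
  - by rewrite size_map size_lamL.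
  move=> t; rewrite -map_comp !count_card; apply: S4; first exact: sqr_ge0.
  by move=> v; rewrite trmx_mul mulmxA; exact: D1.
have e : \sum_(i < d) Num.sqrt (a ^+ 2 * lamf Y i) ^+ k =
         a ^+ k * \sum_(i < d) Num.sqrt (lamf Y i) ^+ k.
  rewrite mulr_sumr; apply: eq_bigr => i _.
  by rewrite sqrtrM ?sqr_ge0 // sqrtr_sqr ger0_norm // exprMn.
have S0 : 0 <= \sum_(i < d) Num.sqrt (lamf Y i) ^+ k.
  by rewrite sumr_ge0 // => j _; rewrite exprn_ge0 ?sqrtr_ge0.
apply: le_trans (ge0_ler_powR _ _ _ key) _; rewrite ?invr_ge0 ?ler0n ?nnegrE //.
- by rewrite sumr_ge0 // => j _; rewrite exprn_ge0 ?sqrtr_ge0.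
- by rewrite sumr_ge0 // => j _; rewrite exprn_ge0 ?sqrtr_ge0.
by rewrite e powRM ?exprn_ge0 // root_pow.
Qed.

End Sp5.


Section Blk.
Variable R : realType.
Variables (n m : nat) (nb : nat -> nat).
Hypothesis Hnb : block_struct n m nb.

Local Notation opn M := (schatten SInf M).

Definition inb (j i : nat) : bool := (nb j <= i < nb j.+1)%N.

Lemma nb_mono a b : (a <= b <= m)%N -> (nb a <= nb b)%N.
Proof.
case: Hnb => _ _ hinc; move=> /andP[hab hbm].
elim: b hab hbm => [|b IH]; first by rewrite leqn0 => /eqP->.
rewrite leq_eqVlt => /orP[/eqP->//|]; rewrite ltnS => hab hbm.
apply: leq_trans (IH hab (ltnW hbm)) (ltnW (hinc _ hbm)).
Qed.

Lemma blk_ex (i : nat) : (i < n)%N -> exists j : 'I_m, inb j i.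
Proof.
case: Hnb => h0 hm _; rewrite -hm => hi.
suff : forall k, (k <= m)%N -> (i < nb k)%N -> exists2 j, (j < k)%N & inb j i.
  by move=> /(_ m (leqnn m) hi) [j hj hji]; exists (Ordinal hj).
elim=> [|k IH] hk; first by rewrite h0.
case: (ltnP i (nb k)) => hik.
  by have [j hj hji] := IH (ltnW hk) hik; exists j => //; exact: ltnW.
by move=> hik'; exists k => //; rewrite /inb hik hik'.
Qed.

Lemma blk_uniq (j1 j2 : 'I_m) i : inb j1 i -> inb j2 i -> j1 = j2.
Proof.
wlog h12 : j1 j2 / (j1 <= j2)%N.
  move=> W h1 h2; case: (leqP j1 j2) => h; first exact: W.
  by apply/esym/W => //; exact: ltnW.
move=> /andP[a1 b1] /andP[a2 b2]; apply/val_inj/eqP; rewrite eqn_leq h12 /=.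
rewrite leqNgt; apply/negP => hlt.
have := @nb_mono j1.+1 j2; rewrite hlt ltnW //= => /(_ isT) h.
by move: (leq_trans b1 h) (leq_ltn_trans a2 b1); rewrite ltnNge a2.
Qed.

Lemma ind_sum (i : 'I_n) : \sum_(j < m) (inb j i)%:R = 1 :> R.
Proof.
have [j0 hj0] := blk_ex (ltn_ord i).
rewrite (bigD1 j0) //= hj0 big1 ?addr0 // => j hj.
case: (boolP (inb j i)) => // hji.
by rewrite (blk_uniq hji hj0) eqxx in hj.
Qed.

Lemma part_sum (G : 'I_n -> R) :
  \sum_(j < m) \sum_(i < n) (inb j i)%:R * G i = \sum_(i < n) G i.
Proof.
rewrite exchange_big; apply: eq_bigr => i _.
by rewrite -mulr_suml ind_sum mul1r.
Qed.

Lemma sq_single (F : 'I_m -> R) :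
  (forall j1 j2, F j1 != 0 -> F j2 != 0 -> j1 = j2) ->
  (\sum_j F j) ^+ 2 = \sum_j F j ^+ 2.
Proof.
move=> h; case: (boolP [exists j, F j != 0]) => [/existsP [j0 hj0]|].
  rewrite (bigD1 j0) //= big1 ?addr0; last first.
    move=> j hj; apply/eqP; apply: contraR hj => hj.
    by rewrite (h _ _ hj hj0) eqxx.
  rewrite (bigD1 j0) //= big1 ?addr0 // => j hj; apply/eqP.
  rewrite sqrf_eq0; apply: contraR hj => hj; by rewrite (h _ _ hj hj0) eqxx.
rewrite negb_exists => /forallP h0.
rewrite !big1 ?expr0n // => j _; move: (h0 j); rewrite negbK => /eqP->.
  by rewrite expr0n.
by [].
Qed.


Lemma nR0 k : nR (0 : 'rV[R]_k) = 0.
Proof. by rewrite /nR big1 // => i _; rewrite mxE expr0n. Qed.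

Lemma zero_ok : in_Db nb (0 : 'M[R]_(n, m)) /\ opn (0 : 'M[R]_(n, m)) <= 1.
Proof.
split; first by move=> i j _; rewrite mxE.
apply: D1' => // v; by rewrite trmx0 mulmx0 nR0 expr1n mul1r nR_ge0.
Qed.

Section X0.
Variable w : 'rV[R]_n.
Hypothesis w1 : nR w = 1.

Definition Sb (j : nat) : R := \sum_(i < n) (inb j i)%:R * w 0 i ^+ 2.
Definition zb (j : nat) : R := Num.sqrt (Sb j).
Definition X0 : 'M[R]_(n, m) := \matrix_(i < n, j < m) ((inb j i)%:R * (w 0 i / zb j)).
Definition zv : 'rV[R]_m := \row_j zb j.

Lemma Sb_ge0 j : 0 <= Sb j.
Proof. by rewrite sumr_ge0 // => i _; rewrite mulr_ge0 ?ler0n ?sqr_ge0. Qed.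

Lemma X0_Db : in_Db nb X0.
Proof. by move=> i j h; rewrite mxE /inb (negbTE h) mul0r. Qed.

Lemma ind2 (b : bool) : (b%:R : R) ^+ 2 = b%:R.
Proof. by case: b; rewrite ?expr1n ?expr0n. Qed.

Lemma X0_opn : opn X0 <= 1.
Proof.
apply: D1' => // v; rewrite expr1n mul1r.
have e1 : nR (v *m X0^T) = \sum_(j < m) v 0 j ^+ 2 * \sum_(i < n) X0 i j ^+ 2.
  rewrite /nR (eq_bigr (fun i => \sum_(j < m) (v 0 j * X0 i j) ^+ 2)); last first.
    move=> i _; rewrite mxE; under eq_bigr do rewrite mxE.
    apply: sq_single => j1 j2; rewrite !mxE !mulf_eq0 !negb_or.
    move=> /andP[_ /andP[h1 _]] /andP[_ /andP[h2 _]].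
    have e1 : inb j1 i by move: h1; case: (inb j1 i); rewrite ?eqxx.
    have e2 : inb j2 i by move: h2; case: (inb j2 i); rewrite ?eqxx.
    exact: blk_uniq e1 e2.
  rewrite exchange_big; apply: eq_bigr => j _; rewrite mulr_sumr.
  by apply: eq_bigr => i _; rewrite exprMn.
rewrite e1 /nR; apply: ler_sum => j _; rewrite -[X in _ <= X]mulr1.
apply: ler_wpM2l; first exact: sqr_ge0.
have -> : \sum_(i < n) X0 i j ^+ 2 = Sb j / Sb j.
  rewrite /Sb mulr_suml; apply: eq_bigr => i _; rewrite mxE exprMn ind2.
  by rewrite exprMn exprVn /zb sqr_sqrtr ?Sb_ge0 // mulrA.
case: (eqVneq (Sb j) 0) => [->|hS]; first by rewrite mul0r.
by rewrite divff.
Qed.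

Lemma zvX0 : zv *m X0^T = w.
Proof.
apply/rowP => i; rewrite !mxE.
have [j0 hj0] := blk_ex (ltn_ord i).
rewrite (bigD1 j0) //= big1 ?addr0; last first.
  move=> j hj; rewrite !mxE; case: (boolP (inb j i)) => h.
    by rewrite (blk_uniq h hj0) eqxx in hj.
  by rewrite mul0r mulr0.
rewrite !mxE hj0 mul1r.
case: (eqVneq (zb j0) 0) => hz; last by rewrite mulrC mulfVK.
rewrite hz mul0r; apply/esym/eqP; rewrite -sqrf_eq0.
have : Sb j0 = 0.
  by move: hz; rewrite /zb => /eqP; rewrite sqrtr_eq0 => h; apply/eqP; rewrite eq_le h Sb_ge0.
rewrite /Sb => /eqP; rewrite psumr_eq0; last first.
  by move=> k _; rewrite mulr_ge0 ?ler0n ?sqr_ge0.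
move=> /allP /(_ i (mem_index_enum _)) /=; by rewrite hj0 mul1r.
Qed.

Lemma nR_zv : nR zv = 1.
Proof.
rewrite -w1 /nR -(part_sum (fun i => w 0 i ^+ 2)); apply: eq_bigr => j _.
by rewrite mxE /zb sqr_sqrtr ?Sb_ge0.
Qed.

End X0.

Lemma exists_X0 (A : 'M[R]_n) :
  exists X : 'M[R]_(n, m), (in_Db nb X /\ opn X <= 1) /\ opn A <= opn (A *m X).
Proof.
case: (posnP n) => [n0|npos].
  exists 0; split; first exact: zero_ok.
  rewrite (@le_trans _ _ 0) ?opn_ge0 //; apply: D1' => // v.
  rewrite expr0n mul0r /nR big1 // => i; by move: (ltn_ord i); rewrite {2}n0.
have [w [w1 wA]] := S3 A npos.
exists (X0 w); split; first by split; [exact: X0_Db | exact: X0_opn].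
have h := D1 (A *m X0 w) (zv w).
rewrite nR_zv // mulr1 trmx_mul mulmxA zvX0 // wA in h.
rewrite -(ler_pXn2r (isT : (0 < 2)%N)) ?nnegrE ?opn_ge0 //.
by rewrite [schatten SInf A]schatten_inf sqr_sqrtr ?Lmax_ge0.
Qed.

End Blk.


Section BN.
Variable R : realType.
Variables (n m : nat) (nb : nat -> nat).
Hypothesis Hnb : block_struct n m nb.
Local Notation opn M := (schatten SInf M).
Local Notation Xs := (fun X : 'M[R]_(n, m) => in_Db nb X /\ schatten SInf X <= 1).

Lemma bnorm_ge p (A : 'M[R]_n) B X :
  (forall Y, Xs Y -> schatten p (A *m Y) <= B) -> Xs X ->
  schatten p (A *m X) <= bnorm p m nb A.
Proof.
move=> hB hX; rewrite /bnorm; apply: sup_upper_bound; last by exists X.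
split; first by exists (schatten p (A *m X)); exists X.
by exists B => y [Y hY <-]; apply: hB.
Qed.

Lemma bnorm_le p (A : 'M[R]_n) b :
  (forall X, Xs X -> schatten p (A *m X) <= b) -> bnorm p m nb A <= b.
Proof.
move=> h; apply: ge_sup.
  by exists (schatten p (A *m (0 : 'M[R]_(n, m)))); exists 0 => //; exact: zero_ok.
by move=> y [Y hY <-]; apply: h.
Qed.

Lemma bound_inf (A : 'M[R]_n) X : Xs X -> opn (A *m X) <= opn A.
Proof.
move=> [_ hX]; apply: le_trans (opn_mul _ _) _.
by rewrite -[X in _ <= X]mulr1 ler_wpM2l // opn_ge0.
Qed.

Lemma bound_fin k (A : 'M[R]_n) X : (0 < k)%N -> Xs X ->
  schatten (SFin k) (A *m X) <= powR (m%:R) (k%:R)^-1 * opn A.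
Proof.
move=> k0 hX; apply: le_trans (P2 _ k0) _.
by rewrite ler_wpM2l ?powR_ge0 // bound_inf.
Qed.

Lemma part_i p (A B : 'M[R]_n) : (0 < p)%N ->
  bnorm (SFin p) m nb (A *m B) <= opn A * bnorm (SFin p) m nb B.
Proof.
move=> p0; apply: bnorm_le => X hX; rewrite -mulmxA.
apply: le_trans (P3 _ _ p0) _; rewrite ler_wpM2l ?opn_ge0 //.
by apply: (bnorm_ge (B := powR (m%:R) (p%:R)^-1 * opn B)) => // Y hY; exact: bound_fin.
Qed.

Lemma part_iia p (A : 'M[R]_n) : (0 < p)%N -> opn A <= bnorm (SFin p) m nb A.
Proof.
move=> p0; have [X [hX hA]] := exists_X0 Hnb A.
apply: le_trans hA _; apply: le_trans (P1 _ p0) _.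
by apply: (bnorm_ge (B := powR (m%:R) (p%:R)^-1 * opn A)) => // Y hY; exact: bound_fin.
Qed.

Lemma part_iib (A : 'M[R]_n) : bnorm SInf m nb A = opn A.
Proof.
apply/eqP; rewrite eq_le; apply/andP; split.
  by apply: bnorm_le => X hX; exact: bound_inf.
have [X [hX hA]] := exists_X0 Hnb A.
apply: le_trans hA _.
by apply: (bnorm_ge (B := opn A)) => // Y hY; exact: bound_inf.
Qed.

Lemma part_iii p (A : 'M[R]_n) : (0 < p)%N ->
  bnorm (SFin p) m nb A <= powR (m%:R) (p%:R)^-1 * opn A.
Proof. by move=> p0; apply: bnorm_le => X hX; exact: bound_fin. Qed.

End BN.


Section IV.
Variable R : realType.

Lemma mxeE r c (M : 'M[R]_(r, c)) (a : 'I_r) (b : 'I_c) : mxe M a b = M a b.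
Proof. by rewrite /mxe !valK. Qed.

Lemma mxe_mul r c p (M : 'M[R]_(r, c)) (P : 'M[R]_(c, p)) (a : nat) (j : 'I_p) :
  mxe (M *m P) a j = \sum_(l < c) mxe M a l * P l j.
Proof.
rewrite /mxe valK /=; case: insubP => [a' _ _|ha] /=.
  by rewrite mxE; apply: eq_bigr => l _; rewrite valK.
by rewrite big1 // => l _; rewrite mul0r.
Qed.

Definition Fro r c (M : 'M[R]_(r, c)) : R := \sum_(j < r) \sum_(i < c) M j i ^+ 2.

Lemma schatten2 r c (M : 'M[R]_(r, c)) : schatten (SFin 2) M = Num.sqrt (Fro M).
Proof.
rewrite schatten_fin /Fro -S5.
under eq_bigr do rewrite sqr_sqrtr ?lamf_ge0 //.
rewrite powR12_sqrt // sumr_ge0 // => i _; exact: lamf_ge0.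
Qed.


Section Col.
Variables (n m : nat) (nb : nat -> nat).
Hypothesis Hnb : block_struct n m nb.
Variables (A C : 'M[R]_n) (Bs : forall j : nat, 'M[R]_(nb j.+1)).
Hypothesis hyp1 : forall (i k : 'I_n) (bi bj : nat), (bj < bi)%N -> (bi < m)%N ->
            (nb bi <= i < nb bi.+1)%N -> (nb bj <= k < nb bj.+1)%N -> C i k = 0.
Hypothesis hyp2 : forall (j : nat) (i k : nat), (j < m)%N -> (i < nb j.+1)%N ->
            (nb j <= k < nb j.+1)%N ->
            mxe C i k = \sum_(l < nb j.+1) mxe (Bs j) i l * mxe A l k.
Variable X : 'M[R]_(n, m).
Hypothesis hX : in_Db nb X.
Variable i : 'I_m.

Local Notation N := (nb i.+1).
Local Notation cf k := (mxe (C *m X) k i).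
Local Notation af k := (mxe (A *m X) k i).

Lemma hN : (N <= n)%N.
Proof.
case: Hnb => _ hm _; rewrite -hm; apply: (nb_mono Hnb).
by apply/andP; split; [exact: ltn_ord | exact: leqnn].
Qed.

Lemma cf_out (k : nat) : (k < n)%N -> (N <= k)%N -> cf k = 0.
Proof.
move=> kn kN; rewrite mxe_mul big1 // => l _.
have [b hb] := blk_ex Hnb kn.
have ib : (i < b)%N.
  rewrite ltnNge; apply/negP => bi; move: hb => /andP[_ hkb].
  have := @nb_mono _ _ _ Hnb b.+1 i.+1; rewrite ltnS bi ltn_ord => /(_ isT) h.
  by move: (leq_trans hkb h); rewrite ltnNge kN.
case: (boolP (inb nb i l)) => hil.
  have -> : mxe C k l = 0.
    rewrite -[k]/(val (Ordinal kn)) mxeE.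
    by apply: (hyp1 (bi := b) (bj := i)).
  by rewrite mul0r.
by rewrite hX ?mulr0.
Qed.

Lemma cf_in (k : nat) : (k < N)%N ->
  cf k = \sum_(l' < N) mxe (Bs i) k l' * af l'.
Proof.
move=> kN; rewrite mxe_mul.
transitivity (\sum_(l < n) (\sum_(l' < N) mxe (Bs i) k l' * mxe A l' l) * X l i).
  apply: eq_bigr => l _; case: (boolP (inb nb i l)) => hil.
    by rewrite (hyp2 (j := i)).
  by rewrite hX ?mulr0.
under eq_bigr do rewrite mulr_suml.
rewrite exchange_big; apply: eq_bigr => l' _.
by rewrite mxe_mul mulr_sumr; apply: eq_bigr => l _; rewrite mulrA.
Qed.

Local Notation opn M := (schatten SInf M).

Lemma col_bound : \sum_(k < n) (C *m X) k i ^+ 2 <=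
  opn (Bs i) ^+ 2 * \sum_(k < n) (A *m X) k i ^+ 2.
Proof.
pose y : 'rV[R]_N := \row_(l < N) af l.
have e1 : \sum_(k < n) (C *m X) k i ^+ 2 = nR (y *m (Bs i)^T).
  transitivity (\sum_(k < n) cf k ^+ 2).
    by apply: eq_bigr => k _; rewrite mxeE.
  rewrite (bigID (fun k : 'I_n => (k < N)%N)) /= [X in _ + X]big1 ?addr0; last first.
    by move=> k; rewrite -leqNgt => hk; rewrite cf_out ?ltn_ord // expr0n.
  rewrite -(big_ord_widen _ (fun k => cf k ^+ 2) hN) /nR; apply: eq_bigr => k _.
  rewrite cf_in // !mxE; congr (_ ^+ 2); apply: eq_bigr => l _.
  by rewrite !mxE mxeE mulrC.
rewrite e1; apply: le_trans (D1 _ _) _; apply: ler_wpM2l; first exact: sqr_ge0.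
have -> : \sum_(k < n) (A *m X) k i ^+ 2 = \sum_(k < n) af k ^+ 2.
  by apply: eq_bigr => k _; rewrite mxeE.
have -> : nR y = \sum_(k < N) af k ^+ 2.
  by apply: eq_bigr => k _; rewrite mxE.
rewrite (bigID (fun k : 'I_n => (k < N)%N)) /= -(big_ord_widen _ (fun k => af k ^+ 2) hN).
by rewrite lerDl sumr_ge0 // => k _; rewrite sqr_ge0.
Qed.

End Col.

Lemma part_iv n m nb (Hnb : block_struct n m nb) (A C : 'M[R]_n)
  (Bs : forall j : nat, 'M[R]_(nb j.+1)) :
  (forall (i k : 'I_n) (bi bj : nat), (bj < bi)%N -> (bi < m)%N ->
            (nb bi <= i < nb bi.+1)%N -> (nb bj <= k < nb bj.+1)%N -> C i k = 0) ->
  (forall (j : nat) (i k : nat), (j < m)%N -> (i < nb j.+1)%N ->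
            (nb j <= k < nb j.+1)%N ->
            mxe C i k = \sum_(l < nb j.+1) mxe (Bs j) i l * mxe A l k) ->
  bnorm (SFin 2) m nb C <=
    (\big[Num.max/0]_(j < m) schatten SInf (Bs j)) * bnorm (SFin 2) m nb A.
Proof.
move=> hyp1 hyp2; set b := \big[Num.max/0]_(j < m) schatten SInf (Bs j).
have b0 : 0 <= b by exact: bm_ge0.
apply: bnorm_le => X [hX hXo].
have hF : Fro (C *m X) <= b ^+ 2 * Fro (A *m X).
  rewrite /Fro (exchange_big _ _ _ _ _ (fun j i => (C *m X) j i ^+ 2)).
  rewrite (exchange_big _ _ _ _ _ (fun j i => (A *m X) j i ^+ 2)) mulr_sumr.
  apply: ler_sum => i _; apply: le_trans (col_bound Hnb hyp1 hyp2 hX i) _.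
  apply: ler_wpM2r; first by rewrite sumr_ge0 // => k _; rewrite sqr_ge0.
  apply: lerXn2r; rewrite ?nnegrE ?opn_ge0 //.
  exact: (bm_ge (fun j : 'I_m => schatten SInf (Bs j)) (mem_index_enum i)).
apply: (@le_trans _ _ (b * schatten (SFin 2) (A *m X))).
  rewrite !schatten2 -(ger0_norm b0) -sqrtr_sqr -sqrtrM ?sqr_ge0 //.
  by rewrite ler_wsqrtr.
rewrite ler_wpM2l //.
apply: (bnorm_ge (B := powR (m%:R) (2%:R)^-1 * schatten SInf A)) => // Y hY.
by apply: bound_fin => //; exact: hY.
Qed.

End IV.


Theorem mainTheorem9 (R : realType) (n m : nat) (nb : nat -> nat)
  (Hnb : block_struct n m nb) (p : nat) (Hp : (0 < p)%N) (A B : 'M[R]_n) :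
  [/\ (* (i) *)
      bnorm (SFin p) m nb (A *m B) <= schatten SInf A * bnorm (SFin p) m nb B,
      (* (ii) *)
      schatten SInf A <= bnorm (SFin p) m nb A /\
      bnorm SInf m nb A = schatten SInf A,
      (* (iii) *)
      bnorm (SFin p) m nb A <= powR (m%:R) (p%:R)^-1 * schatten SInf A &
      (* (iv) *)
      forall (C : 'M[R]_n) (Bs : forall j : nat, 'M[R]_(nb j.+1)),
        (* C is block upper triangular *)
        (forall (i k : 'I_n) (bi bj : nat), (bj < bi)%N -> (bi < m)%N ->
            (nb bi <= i < nb bi.+1)%N -> (nb bj <= k < nb bj.+1)%N -> C i k = 0) ->
        (* C(0:j, j) = B_j A(0:j, j) *)
        (forall (j : nat) (i k : nat), (j < m)%N -> (i < nb j.+1)%N ->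
            (nb j <= k < nb j.+1)%N ->
            mxe C i k = \sum_(l < nb j.+1) mxe (Bs j) i l * mxe A l k) ->
        bnorm (SFin 2) m nb C <=
          (\big[Num.max/0]_(j < m) schatten SInf (Bs j)) * bnorm (SFin 2) m nb A].
Proof.
split.
- exact: part_i.
- split; [exact: part_iia | exact: part_iib].
- exact: part_iii.
- by move=> C Bs h1 h2; exact: part_iv h1 h2.
Qed.
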